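(* Let $f\in\mathbb Q(x)$ be a rational function with rational coefficients that is defined on $(0,1)$ and satisfies $0<f(p)<1$ for all $p\in(0,1)$. Then there exist an integer $k\ge0$ and integers $0\le d_i\le e_i$ ($i=0,\dots,k$) such that, with $d(p)=\sum_{i=0}^k d_ip^i(1-p)^{k-i}$ and $e(p)=\sum_{i=0}^k e_ip^i(1-p)^{k-i}$, one has $e(p)\neq0$ and $f(p)=d(p)/e(p)$ for all $p\in(0,1)$. *)

(* Defs.v *)
From HB Require Import structures.
From mathcomp Require Import all_boot all_order all_algebra.
From mathcomp Require Import reals.
Set Implicit Arguments. Unset Strict Implicit. Unset Printing Implicit Defensive.
Import Order.TTheory GRing.Theory Num.Theory.
Local Open Scope ring_scope.

Definition qeval (R : realType) (P : {poly rat}) (x : R) : R :=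
  (map_poly (fun c : rat => ratr c) P).[x].

Definition bern_sum (R : realType) (k : nat) (c : nat -> nat) (p : R) : R :=
  \sum_(i < k.+1) (c i)%:R * p ^+ i * (1 - p) ^+ (k - i).

(* Main.v *)
Require Import Defs.
From HB Require Import structures.
From mathcomp Require Import all_boot all_order all_algebra.
From mathcomp Require Import reals.
From mathcomp Require Import complex.
From mathcomp Require Import lra ring zify.
Import Order.TTheory GRing.Theory Num.Theory.
Local Open Scope ring_scope.
Set Implicit Arguments. Unset Strict Implicit.
Section T.
Variable R : realType.
Implicit Types p q H : {poly R}.

Definition nnc (p : {poly R}) := forall i, 0 <= p`_i.
Definition TT (H : {poly R}) := exists N, nnc ((1 + 'X)^+N * H).

Lemma nnc_mul p q : nnc p -> nnc q -> nnc (p * q).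
Proof. move=> hp hq i; rewrite coefM; apply: sumr_ge0 => j _; exact: mulr_ge0. Qed.

Lemma coef_1X N i : ((1 + 'X : {poly R})^+N)`_i = ('C(N, i))%:R.
Proof.
elim: N i => [|N IH] i; first by rewrite expr0 coef1 bin0n.
rewrite exprS mulrDl mul1r coefD coefXM IH; case: i => [|i] /=.
  by rewrite !bin0 addr0.
by rewrite IH binS natrD addrC.
Qed.

Lemma nnc_1X N : nnc ((1 + 'X)^+N).
Proof. by move=> i; rewrite coef_1X ler0n. Qed.

Lemma TT_mul p q : TT p -> TT q -> TT (p * q).
Proof.
move=> [N1 h1] [N2 h2]; exists (N1 + N2)%N.
have -> : (1 + 'X)^+(N1 + N2) * (p * q) = ((1 + 'X)^+N1 * p) * ((1 + 'X)^+N2 * q).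
  by rewrite exprD; ring.
exact: nnc_mul.
Qed.

Lemma TT_C c : 0 <= c -> TT c%:P.
Proof. by move=> hc; exists 0%N => i; rewrite expr0 mul1r coefC; case: (i == 0). Qed.

Lemma TT_lin a : 0 <= a -> TT ('X + a%:P).
Proof.
move=> ha; exists 0%N => i; rewrite expr0 mul1r coefD coefX coefC.
by case: i => [|[|i]] /=; rewrite ?addr0 ?add0r ?ler01 ?lexx.
Qed.

Lemma F_ge0 (a c v A sig j s : R) : 0 < c -> v = a^+2 + c -> A = 4 * `|a| + v ->
  sig * c = A -> 0 <= j -> 0 <= s -> (1 + `|a| + A) * sig + 1 <= j + s ->
  0 <= (j + 1) * (j + 2) - 2 * a * (j + 2) * s + v * s * (s - 1).
Proof.
move=> hc hv hA hsig hj hs hN.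
have ha : - `|a| <= a <= `|a| by rewrite -ler_norml.
case/andP: ha => ha1 ha2.
have hsg : 0 <= sig.
  have : 0 <= A by rewrite hA hv; have := normr_ge0 a; nra.
  move=> hA0; nra.
have key : (j + 1) * (j + 2) - 2 * a * (j + 2) * s + v * s * (s - 1) >=
   (j - a * s)^+2 + c * s^+2 - A * s.
  have : 0 <= (`|a| - a) * s by apply: mulr_ge0 => //; lra.
  have -> : (j + 1) * (j + 2) - 2 * a * (j + 2) * s + v * s * (s - 1) =
    ((j - a * s) ^+ 2 + c * s ^+ 2 - A * s) + (3 * j + 2 + 4 * ((`|a| - a) * s)).
    by rewrite hA hv; ring.
  lra.
apply: le_trans key.
have [hsl|hsl] := leP sig s.
  have : A * s <= c * s ^+2.
    rewrite -hsig -subr_ge0.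
    have -> : c * s ^+ 2 - sig * c * s = (c * s) * (s - sig) by ring.
    apply: mulr_ge0; [apply: mulr_ge0|]; lra.
  have := sqr_ge0 (j - a * s); lra.
have h1 : A * sig + 1 <= j - a * s by nra.
have hA0 : 0 <= A by nra.
have : A * s <= A * sig by nra.
have : 0 <= (j - a * s) * (j - a * s - 1).
  apply: mulr_ge0; nra.
have : 0 <= c * s ^+ 2 by apply: mulr_ge0; [lra| exact: sqr_ge0].
rewrite expr2; nra.
Qed.
Lemma TT_quad (a c : R) : 0 < c -> TT (('X - a%:P)^+2 + c%:P).
Proof.
move=> hc.
pose v := a ^+ 2 + c.
pose A := 4 * `|a| + v.
pose sig := A / c.
pose tau := 2 * `|a| / v.
have hv : 0 < v by rewrite /v; have := sqr_ge0 a; lra.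
have hA : 0 <= A by rewrite /A; have := normr_ge0 a; lra.
have hsig : sig * c = A by rewrite /sig divfK // gt_eqF.
have hsg : 0 <= sig by rewrite /sig divr_ge0 // ltW.
have htau : tau * v = 2 * `|a| by rewrite /tau divfK // gt_eqF.
have hta : 0 <= tau by rewrite /tau; apply: divr_ge0; [have := normr_ge0 a; lra | exact: ltW].
pose beta := (1 + `|a| + A) * sig + 1 + tau.
have hb : 0 <= beta by rewrite /beta; have := normr_ge0 a; nra.
pose N := Num.Def.archi_bound beta.
have hN : beta < N%:R := archi_boundP hb.
exists N => m.
have -> : ('X - a%:P)^+2 + c%:P = 'X^2 - 'X * (2 * a)%:P + v%:P :> {poly R}.
  by rewrite /v polyCD polyCM polyC_exp; ring.
have -> : (1 + 'X)^+N * ('X^2 - 'X * (2 * a)%:P + v%:P) =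
  (1 + 'X)^+N * 'X^2 - ((1 + 'X)^+N * 'X) * (2 * a)%:P + (1 + 'X)^+N * v%:P.
  by ring.
rewrite coefD coefB !coefMC coefMXn coefMX !coef_1X.
case: m => [|[|j]] /=.
- by rewrite mul0r subrr add0r mul1r ltW.
- rewrite bin0 bin1 mul1r.
  have : 2 * a <= 2 * `|a| by have := ler_norm a; lra.
  have hNt : tau < N%:R by rewrite /beta in hN; have := normr_ge0 a; nra.
  have : 0 < (N%:R - tau) * v by apply: mulr_gt0; lra.
  rewrite -htau; nra.
- rewrite subn2 /=.
  have [hjN|hjN] := leqP N j.
    have h1 : 'C(N, j.+1) = 0%N by apply: bin_small; rewrite ltnS.
    have h2 : 'C(N, j.+2) = 0%N by apply: bin_small; rewrite ltnS; exact: leqW.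
    rewrite h1 h2 mul0r subr0 mul0r addr0; exact: ler0n.
  have R1 := mul_bin_left N j.
  have R2 := mul_bin_left N j.+1.
  move/(congr1 (fun n : nat => n%:R : R)): R1; rewrite !natrM (@natrB R N j (ltnW hjN)) => R1.
  move/(congr1 (fun n : nat => n%:R : R)): R2; rewrite !natrM (@natrB R N j.+1 hjN) => R2.
  move: R1 R2.
  set x := 'C(N, j)%:R; set y := 'C(N, j.+1)%:R; set z := 'C(N, j.+2)%:R.
  rewrite -(addn2 j) -(addn1 j) !natrD.
  set J := j%:R; set NN := N%:R => R1 R2.
  have hJ : 0 <= J := ler0n _ _.
  have hF := @F_ge0 a c v A sig J (NN - J) hc erefl erefl hsig hJ.
  have hx : 0 <= x := ler0n _ _.
  have hF' : 0 <= (J + 1) * (J + 2) - 2 * a * (J + 2) * (NN - J) + v * (NN - J) * (NN - J - 1).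
    apply: hF.
      rewrite subr_ge0 /J /NN ler_nat; exact: ltnW.
    rewrite /beta in hN; lra.
  have hP : 0 < (J + 1) * (J + 2) by apply: mulr_gt0; lra.
  have E : (J + 1) * (J + 2) * (x - y * (2 * a) + z * v) =
    x * ((J + 1) * (J + 2) - 2 * a * (J + 2) * (NN - J) + v * (NN - J) * (NN - J - 1)).
    have -> : (J + 1) * (J + 2) * (x - y * (2 * a) + z * v) =
      (J + 1) * (J + 2) * x - 2 * a * (J + 2) * ((J + 1) * y) +
      v * (J + 1) * ((J + 2) * z) by ring.
    rewrite R2.
    have -> : v * (J + 1) * ((NN - (J + 1)) * y) = v * (NN - (J + 1)) * ((J + 1) * y) by ring.
    rewrite R1; ring.
  have : 0 <= (J + 1) * (J + 2) * (x - y * (2 * a) + z * v).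
    rewrite E; exact: mulr_ge0.
  by rewrite pmulr_rge0.
Qed.
Lemma quad_id (K : comRingType) (X A B I : K) : I * I = -1 ->
  (X - A) ^+ 2 + B * B = (X - (A + I * B)) * (X - (A - I * B)).
Proof.
move=> hI; have -> : (X - (A + I * B)) * (X - (A - I * B)) = (X - A) ^+ 2 - (I * I) * (B * B) by ring.
rewrite hI; ring.
Qed.

Local Open Scope complex_scope.
Lemma TT_pos_size n (H : {poly R}) : (size H <= n)%N ->
  (forall t, 0 < t -> 0 < H.[t]) -> TT H.
Proof.
elim: n H => [|n IH] H hs hpos.
  have := hpos 1 ltr01; move: hs; rewrite leqn0 size_poly_eq0 => /eqP ->.
  by rewrite horner0 ltxx.
have [hs1|hs1] := leqP (size H) 1.
  rewrite (size1_polyC hs1); apply: TT_C.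
  have := hpos 1 ltr01; rewrite [in H.[_]](size1_polyC hs1) hornerC; exact: ltW.
have H0 : H != 0 by rewrite -size_poly_gt0 (ltn_trans _ hs1).
pose f := real_complex R.
pose Hc := map_poly f H.
have hsc : size Hc = size H by rewrite size_map_poly.
have [z hz] : exists z, root Hc z.
  by apply/closed_rootP; rewrite hsc; rewrite neq_ltn hs1 orbT.
case: z hz => a b hz.
have [b0|b0] := eqVneq b 0.
  subst b.
  have hra : root H a by rewrite -(fmorph_root f).
  have [H1 eH] := factor_theorem _ _ hra.
  have ha : a <= 0.
    rewrite leNgt; apply/negP => ha; have := hpos a ha; by rewrite (rootP hra) ltxx.
  have H10 : H1 != 0 by apply: contraNneq H0 => e; rewrite eH e mul0r.
  have hsz : size H = (size H1).+1.
    by rewrite eH size_mul ?polyXsubC_eq0 // size_XsubC addn2.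
  rewrite eH; apply: TT_mul.
    apply: IH; first by rewrite -ltnS -hsz.
    move=> t ht; have := hpos t ht; rewrite eH hornerM hornerXsubC.
    by rewrite pmulr_lgt0 // subr_gt0 (le_lt_trans ha).
  rewrite -[a]opprK polyCN opprK; apply: TT_lin; rewrite oppr_ge0 //.
pose q := ('X - a%:P)^+2 + (b ^+ 2)%:P : {poly R}.
have hb2 : 0 < b ^+ 2 by rewrite exprn_even_gt0.
have hqpos t : 0 < q.[t].
  rewrite /q !hornerE.
  by apply: ltr_wpDl => //; exact: sqr_ge0.
have q0 : q != 0 by apply/negP => /eqP e; have := hqpos 0; rewrite e horner0 ltxx.
have hq : map_poly f q = ('X - (a +i* b)%:P) * ('X - (a -i* b)%:P).
  have e1 : a +i* b = f a + 'i * f b by apply/eqP; rewrite eq_complex /=; apply/andP; split; apply/eqP; ring.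
  have e2 : a -i* b = f a - 'i * f b by apply/eqP; rewrite eq_complex /=; apply/andP; split; apply/eqP; ring.
  have e3 : ('i * 'i : R[i]) = -1 by rewrite -expr2 sqr_i.
  rewrite e1 e2 /q rmorphD rmorphXn rmorphB /= map_polyX !map_polyC /= rmorphXn.
  rewrite !polyCD !polyCN !polyCM.
  apply: quad_id; rewrite -polyCM e3 polyCN; done.
have hdiv : q %| H.
  rewrite -(dvdp_map f) hq.
  have [G1 eG1] := factor_theorem _ _ hz.
  have hconj : map_poly conjc Hc = Hc.
    rewrite /Hc -map_poly_comp; apply: eq_map_poly => x /=; exact: conjc_real.
  have hzc : root Hc (a -i* b).
    by rewrite -[a -i* b]/((a +i* b)^*) -complex_root_conj hconj.
  have hzc1 : root G1 (a -i* b).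
    move: hzc; rewrite /root eG1 hornerM hornerXsubC mulf_eq0 => /orP [//|].
    rewrite subr_eq0 eq_complex /= eqxx /=.
    move/eqP => e; have : b == 0 by apply/eqP; lra.
    by rewrite (negPf b0).
  have [G2 eG2] := factor_theorem _ _ hzc1.
  rewrite -/Hc eG1 eG2 -mulrA [_ * ('X - _)]mulrC.
  exact: dvdp_mull.
set H1 := H %/ q.
have eH : H = H1 * q by rewrite divpK.
have H10 : H1 != 0 by apply: contraNneq H0 => e; rewrite eH e mul0r.
have sq : size q = 3%N.
  rewrite /q size_addl size_exp_XsubC //.
  by rewrite (leq_ltn_trans (size_polyC_leq1 _)).
have hsz : size H = (size H1).+2.
  by rewrite eH size_mul // sq addn3.
rewrite eH; apply: TT_mul.
  apply: IH; first by rewrite -ltnS (leq_trans _ hs) // hsz.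
  move=> t ht; have := hpos t ht; rewrite eH hornerM.
  by rewrite pmulr_lgt0.
exact: TT_quad.
Qed.
Lemma TT_pos (H : {poly R}) : (forall t, 0 < t -> 0 < H.[t]) -> TT H.
Proof. exact: (@TT_pos_size (size H)). Qed.
End T.
Definition Ht (R0 : comNzRingType) (G : {poly R0}) (n : nat) : {poly R0} :=
  \sum_(j < n.+1) G`_j *: ('X^j * (1 + 'X)^+(n - j)).

Arguments Ht {R0}.

Lemma split_pow (R0 : comNzRingType) (x : R0) (k i : nat) : (i <= k)%N ->
  x ^+ k = x ^+ i * x ^+ (k - i).
Proof. by move=> h; rewrite -exprD subnKC. Qed.

Section E.
Variable R : realType.

Lemma bern_eval (C : {poly R}) k (p : R) : p != 1 -> (size C <= k.+1)%N ->
  (1 - p) ^+ k * C.[p / (1 - p)] = \sum_(i < k.+1) C`_i * p ^+ i * (1 - p) ^+ (k - i).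
Proof.
move=> hp hs; rewrite (horner_coef_wide _ hs) mulr_sumr; apply: eq_bigr => i _.
have hp1 : 1 - p != 0 by rewrite subr_eq0 eq_sym.
rewrite (@split_pow _ (1 - p) k i) ?expr_div_n; last by rewrite -ltnS.
have hpi : (1 - p) ^+ i != 0 by rewrite expf_neq0.
by field; rewrite ?hp1 ?hpi ?expf_neq0.
Qed.

Lemma Ht_eval (G : {poly R}) n (p : R) : p != 1 -> (size G <= n.+1)%N ->
  (1 - p) ^+ n * (Ht G n).[p / (1 - p)] = G.[p].
Proof.
move=> hp hs; rewrite /Ht horner_sum mulr_sumr (horner_coef_wide _ hs).
apply: eq_bigr => j _.
have hp1 : 1 - p != 0 by rewrite subr_eq0 eq_sym.
rewrite hornerZ hornerM hornerXn horner_exp hornerD hornerX hornerC (@split_pow _ (1 - p) n j); last by rewrite -ltnS.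
have e1 : (1 - p) * (1 + p / (1 - p)) = 1 by field; rewrite ?hp1 ?hpi ?expf_neq0.
have e2 : (1 - p) * (p / (1 - p)) = p by field; rewrite ?hp1 ?hpi ?expf_neq0.
transitivity (G`_j * (((1 - p) * (p / (1 - p))) ^+ j * ((1 - p) * (1 + p / (1 - p))) ^+ (n - j))).
  rewrite !exprMn; ring.
by rewrite e1 e2 expr1n mulr1.
Qed.
End E.


Lemma map_Ht (R : realType) (G : {poly rat}) n :
  map_poly (fun c : rat => ratr c : R) (Ht G n) = Ht (map_poly (fun c : rat => ratr c : R) G) n.
Proof.
rewrite /Ht.
rewrite rmorph_sum.
apply: eq_bigr => j _.
by rewrite /= map_polyZ rmorphM !rmorphXn rmorphD rmorph1 /= map_polyX coef_map.
Qed.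

Lemma coef_1X_gen (R0 : comNzRingType) N i : ((1 + 'X : {poly R0})^+N)`_i = ('C(N, i))%:R.
Proof.
elim: N i => [|N IH] i; first by rewrite expr0 coef1 bin0n.
rewrite exprS mulrDl mul1r coefD coefXM IH; case: i => [|i] /=.
  by rewrite !bin0 addr0.
by rewrite IH binS natrD addrC.
Qed.

Lemma size_1X (R0 : comNzRingType) N : (size ((1 + 'X : {poly R0})^+N)%R <= N.+1)%N.
Proof.
apply: leq_trans (size_poly_exp_leq _ _) _.
have : (size (1 + 'X : {poly R0})%R <= 2)%N.
  apply: leq_trans (size_polyD _ _) _; rewrite geq_max size_polyX size_poly1 //.
case: (size _) => [|[|[|m]]] //= _; rewrite ?mul0n ?mul1n //.
Qed.

Lemma size_Ht (R0 : comNzRingType) (G : {poly R0}) n : (size (Ht G n) <= n.+1)%N.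
Proof.
rewrite /Ht; elim/big_ind: _ => //.
- by rewrite size_poly0.
- by move=> x y hx hy; apply: leq_trans (size_polyD _ _) _; rewrite geq_max hx hy.
- move=> j _; apply: leq_trans (size_scale_leq _ _) _.
  apply: leq_trans (size_polyMleq _ _) _.
  rewrite size_polyXn addSn /=.
  have hj : (j <= n)%N by rewrite -ltnS.
  apply: leq_trans (leq_add (leqnn j) (size_1X _ (n - j))) _.
  by rewrite addnS subnKC.
Qed.

Lemma size_C (R0 : comNzRingType) (G : {poly R0}) N n :
  (size ((1 + 'X)^+N * Ht G n)%R <= (N + n).+1)%N.
Proof.
apply: leq_trans (size_polyMleq _ _) _.
have := size_1X R0 N; have := @size_Ht _ G n.
lia.
Qed.

Section Main.
Variable R : realType.

Lemma Ht_qeval (G : {poly rat}) n (p : R) : p != 1 -> (size G <= n.+1)%N ->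
  (1 - p) ^+ n * (map_poly (fun c : rat => ratr c : R) (Ht G n)).[p / (1 - p)] = qeval G p.
Proof.
move=> hp hs; rewrite map_Ht Ht_eval //; by rewrite size_map_poly.
Qed.

Lemma Ht_pos (G : {poly rat}) n : (size G <= n.+1)%N ->
  (forall p : R, 0 < p < 1 -> 0 < qeval G p) ->
  forall t : R, 0 < t -> 0 < (map_poly (fun c : rat => ratr c : R) (Ht G n)).[t].
Proof.
move=> hs hG t ht.
pose p := t / (1 + t).
have h1t : 0 < 1 + t by lra.
have hp0 : 0 < p by rewrite /p divr_gt0.
have hp1 : p < 1 by rewrite /p ltr_pdivrMr // mul1r; lra.
have hpn : p != 1 by rewrite lt_eqF.
have e : p / (1 - p) = t.
  rewrite /p; have h1t' : 1 + t != 0 by rewrite gt_eqF.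
  have -> : 1 - t / (1 + t) = 1 / (1 + t) by field.
  by field.
have := hG p; rewrite hp0 hp1 => /(_ isT).
rewrite -(Ht_qeval hpn hs) e => h.
have hq : 0 < (1 - p) ^+ n by apply: exprn_gt0; lra.
by rewrite pmulr_rgt0 in h.
Qed.

Lemma coef_rat_nonneg (H : {poly rat}) N M :
  nnc ((1 + 'X)^+N * map_poly (fun c : rat => ratr c : R) H) ->
  forall i, 0 <= ((1 + 'X)^+(M + N) * H)`_i.
Proof.
move=> hn i.
have e : (1 + 'X)^+(M + N) * H = (1 + 'X)^+M * ((1 + 'X)^+N * H) by rewrite exprD mulrA.
rewrite e coefM; apply: sumr_ge0 => j _; apply: mulr_ge0.
  by rewrite coef_1X_gen ler0n.
have := hn (i - j)%N.
rewrite -(ler0q R) -coef_map /= rmorphM rmorphXn rmorphD rmorph1 /= map_polyX.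
done.
Qed.

Lemma bern_C (G : {poly rat}) n N (p : R) : 0 < p < 1 -> (size G <= n.+1)%N ->
  \sum_(i < (N + n).+1) ratr (((1 + 'X)^+N * Ht G n)`_i) * p ^+ i * (1 - p) ^+ ((N + n) - i)
  = qeval G p.
Proof.
move=> /andP [hp0 hp1] hs.
have hpn : p != 1 by rewrite lt_eqF.
have h1p : 1 - p != 0 by rewrite subr_eq0 eq_sym.
pose C := map_poly (fun c : rat => ratr c : R) ((1 + 'X)^+N * Ht G n).
have hsC : (size C <= (N + n).+1)%N by rewrite size_map_poly size_C.
have := bern_eval hpn hsC.
under eq_bigr do rewrite coef_map.
move=> <-.
rewrite -(Ht_qeval hpn hs) /C rmorphM rmorphXn rmorphD rmorph1 /= map_polyX hornerM.
rewrite horner_exp hornerD hornerX hornerC exprD.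
have e1 : (1 - p) * (1 + p / (1 - p)) = 1 by field.
transitivity (((1 - p) * (1 + p / (1 - p))) ^+ N * ((1 - p) ^+ n *
   (map_poly (fun c : rat => ratr c : R) (Ht G n)).[p / (1 - p)])).
  by rewrite exprMn; ring.
by rewrite e1 expr1n mul1r.
Qed.
End Main.

Lemma den_num (x : rat) : 0 <= x -> (`|denq x|%N)%:R * x = (`|numq x|%N)%:R.
Proof.
move=> hx.
rewrite !natr_absz !ger0_norm ?numq_ge0 // ?ltW ?denq_gt0 //.
by rewrite numqE mulrC.
Qed.

Lemma common_den (f : nat -> rat) k : (forall i, (i < k)%N -> 0 <= f i) ->
  exists (D : nat) (g : nat -> nat), (0 < D)%N /\
    forall i, (i < k)%N -> D%:R * f i = (g i)%:R.
Proof.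
elim: k => [|k IH] hf.
  by exists 1%N, (fun _ => 0%N).
have [D [g [hD hg]]] : exists (D : nat) (g : nat -> nat), (0 < D)%N /\
    forall i, (i < k)%N -> D%:R * f i = (g i)%:R.
  by apply: IH => i hi; apply: hf; rewrite ltnS ltnW.
pose d := `|denq (f k)|%N.
pose m := `|numq (f k)|%N.
have hd : (0 < d)%N by rewrite /d absz_gt0 gt_eqF ?denq_gt0.
exists (D * d)%N, (fun i => if (i < k)%N then (g i * d)%N else (D * m)%N); split.
  by rewrite muln_gt0 hD hd.
move=> i; rewrite ltnS leq_eqVlt => /orP [/eqP ->|hi].
  rewrite ltnn natrM -mulrA den_num ?natrM //; apply: hf; exact: ltnSn.
by rewrite hi natrM mulrAC hg // natrM.
Qed.

Lemma bern_scale (R : realType) (c : nat -> nat) (a : nat -> rat) (D k : nat) (p : R) :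
  (forall i, (i < k.+1)%N -> D%:R * a i = (c i)%:R) ->
  bern_sum k c p = D%:R * \sum_(i < k.+1) ratr (a i) * p ^+ i * (1 - p) ^+ (k - i).
Proof.
move=> h; rewrite /bern_sum mulr_sumr; apply: eq_bigr => i _.
rewrite -(ratr_nat R (c i)) -h // rmorphM /= ratr_nat; ring.
Qed.

Unset Implicit Arguments.
Theorem lemma2p7 (R : realType) (P Q : {poly rat})
  (hQ : Q != 0) (hcop : coprimep P Q)
  (hdef : forall p : R, 0 < p < 1 -> qeval Q p != 0)
  (hf : forall p : R, 0 < p < 1 ->
          0 < qeval P p / qeval Q p < 1) :
  exists (k : nat) (d e : nat -> nat),
    (forall i, (i <= k)%N -> (d i <= e i)%N) /\
    forall p : R, 0 < p < 1 ->
      bern_sum k e p != 0 /\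
      qeval P p / qeval Q p = bern_sum k d p / bern_sum k e p.
Proof.
have qM (X Y : {poly rat}) (p : R) : qeval (X * Y) p = qeval X p * qeval Y p.
  by rewrite /qeval rmorphM hornerM.
have qB (X Y : {poly rat}) (p : R) : qeval (X - Y) p = qeval X p - qeval Y p.
  by rewrite /qeval rmorphB hornerD hornerN.
pose A := P * Q.
pose B := Q * Q - P * Q.
have posA (p : R) : 0 < p < 1 -> 0 < qeval A p.
  move=> hp; have := hf p hp; have := hdef p hp.
  rewrite /A qM; set a := qeval P p; set b := qeval Q p => hb /andP [h1 h2].
  have e : a * b = (a / b) * (b * b) by field.
  rewrite e; apply: mulr_gt0 => //; rewrite -expr2 exprn_even_gt0 //.
have posB (p : R) : 0 < p < 1 -> 0 < qeval B p.
  move=> hp; have := hf p hp; have := hdef p hp.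
  rewrite /B qB !qM; set a := qeval P p; set b := qeval Q p => hb /andP [h1 h2].
  have e : b * b - a * b = (1 - a / b) * (b * b) by field.
  rewrite e; apply: mulr_gt0; first by lra.
  by rewrite -expr2 exprn_even_gt0.
pose n := (size A + size B)%N.
have hsA : (size A <= n.+1)%N by apply: leqW; apply: leq_addr.
have hsB : (size B <= n.+1)%N by apply: leqW; apply: leq_addl.
have [NA hNA] := TT_pos (Ht_pos hsA posA).
have [NB hNB] := TT_pos (Ht_pos hsB posB).
pose N := (NB + NA)%N.
pose k := (N + n)%N.
pose CA := (1 + 'X)^+N * Ht A n.
pose CB := (1 + 'X)^+N * Ht B n.
have cA i : 0 <= CA`_i by apply: coef_rat_nonneg hNA i.
have cB i : 0 <= CB`_i by rewrite /CB /N addnC; apply: coef_rat_nonneg hNB i.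
pose f i := if (i < k.+1)%N then CA`_i else CB`_(i - k.+1).
have [D [g [hD hg]]] := @common_den f (k.+1 + k.+1) (fun i _ => if (i < k.+1)%N as b return 0 <= (if b then CA`_i else CB`_(i - k.+1)) then cA i else cB _).
exists k, g, (fun i => g i + g (k.+1 + i))%N; split.
  by move=> i _; exact: leq_addr.
move=> p hp.
have eA : bern_sum k g p = D%:R * qeval A p.
  rewrite (@bern_scale R g (fun i => CA`_i) D k p).
    by rewrite /k /CA bern_C // hp.
  move=> i hi; rewrite -hg; first by rewrite /f hi.
  by rewrite (leq_trans hi) // leq_addr.
have eE : bern_sum k (fun i => g i + g (k.+1 + i))%N p = D%:R * (qeval A p + qeval B p).
  rewrite (@bern_scale R _ (fun i => CA`_i + CB`_i) D k p).
    rewrite /k -(bern_C N hp hsA) -(bern_C N hp hsB) -big_split /=.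
    congr (_ * _); apply: eq_bigr => i _; rewrite rmorphD /= !mulrDl. by [].
  move=> i hi; rewrite natrD -hg; last by rewrite (leq_trans hi) // leq_addr.
  rewrite -hg; last by rewrite ltn_add2l.
  rewrite /f hi ltnNge leq_addr /= addKn mulrDr //.
have hb := hdef p hp.
have eAB : qeval A p + qeval B p = qeval Q p * qeval Q p.
  by rewrite /A /B qB !qM; ring.
have hD0 : (D%:R : R) != 0 by rewrite pnatr_eq0 -lt0n.
split.
  by rewrite eE eAB mulf_neq0 // mulf_neq0.
rewrite eE eA eAB /A qM.
move: hb hD0; set a := qeval P p; set b := qeval Q p; set d := (D%:R : R) => hb hD0.
by field; rewrite hD0 hb.
Qed.
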